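(* Let $G$ be a non-archimedean Hausdorff topological group, $M$ a Hausdorff topological group, and $f:M\to G$ a continuous homomorphism which is an epimorphism in the category of Hausdorff topological groups. Then $f(M)$ is dense in $G$.
   Context: A topological group is non-archimedean if it has a local base at the identity consisting of open subgroups. $f$ is an epimorphism in the category of Hausdorff topological groups if for every Hausdorff topological group $F$ and all continuous homomorphisms $g,h:G\to F$, $g\circ f=h\circ f$ implies $g=h$. *)

(* Defs.v *)
Record TopGroup := {
  carrier :> Type;
  mul : carrier -> carrier -> carrier;
  inv : carrier -> carrier;
  one : carrier;
  mulA : forall x y z, mul x (mul y z) = mul (mul x y) z;
  mul1g : forall x, mul one x = x;
  mulg1 : forall x, mul x one = x;
  mulVg : forall x, mul (inv x) x = one;
  mulgV : forall x, mul x (inv x) = one;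
  is_open : (carrier -> Prop) -> Prop;
  open_full : is_open (fun _ => True);
  open_inter : forall U V, is_open U -> is_open V ->
      is_open (fun x => U x /\ V x);
  open_union : forall (Fam : (carrier -> Prop) -> Prop),
      (forall U, Fam U -> is_open U) ->
      is_open (fun x => exists U, Fam U /\ U x);
  (* continuity of multiplication w.r.t. the product topology on G x G:
     the preimage of an open W is a neighbourhood of each of its points,
     i.e. contains a basic open box U x V around it *)
  mul_continuous : forall W x y, is_open W -> W (mul x y) ->
      exists U V, is_open U /\ is_open V /\ U x /\ V y /\
        (forall a b, U a -> V b -> W (mul a b));
  inv_continuous : forall W, is_open W -> is_open (fun x => W (inv x))
}.

Arguments mul {t}.
Arguments inv {t}.
Arguments one {t}.
Arguments is_open {t}.

Definition hausdorff (G : TopGroup) : Prop :=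
  forall x y : G, x <> y ->
    exists U V, is_open U /\ is_open V /\ U x /\ V y /\
      (forall z, U z -> V z -> False).

Definition is_subgroup (G : TopGroup) (H : G -> Prop) : Prop :=
  H one /\ (forall x y, H x -> H y -> H (mul x y)) /\
  (forall x, H x -> H (inv x)).

Definition non_archimedean (G : TopGroup) : Prop :=
  forall U : G -> Prop, is_open U -> U one ->
    exists H : G -> Prop, is_subgroup G H /\ is_open H /\
      (forall x, H x -> U x).

Definition is_hom (A B : TopGroup) (f : A -> B) : Prop :=
  forall x y, f (mul x y) = mul (f x) (f y).

Definition continuous (A B : TopGroup) (f : A -> B) : Prop :=
  forall W : B -> Prop, is_open W -> is_open (fun x => W (f x)).

Definition cont_hom (A B : TopGroup) (f : A -> B) : Prop :=
  is_hom A B f /\ continuous A B f.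

Definition epi_Haus (M G : TopGroup) (f : M -> G) : Prop :=
  forall (F : TopGroup), hausdorff F ->
    forall g h : G -> F, cont_hom G F g -> cont_hom G F h ->
      (forall m, g (f m) = h (f m)) -> forall x, g x = h x.

Definition dense_image (M G : TopGroup) (f : M -> G) : Prop :=
  forall U : G -> Prop, is_open U -> (exists x, U x) -> exists m, U (f m).

(* Main.v *)
Require Import Defs.
From Stdlib Require Import List Classical ClassicalEpsilon FunctionalExtensionality PropExtensionality ProofIrrelevance Bool.

Section GL.
Variable T : TopGroup.
Implicit Types x y z a b c : T.

Lemma mulKV x y : mul (mul x y) (inv y) = x.
Proof. rewrite <- mulA, mulgV, mulg1. reflexivity. Qed.
Lemma mulVK x y : mul (mul x (inv y)) y = x.
Proof. rewrite <- mulA, mulVg, mulg1. reflexivity. Qed.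
Lemma mulKg x y : mul (inv x) (mul x y) = y.
Proof. rewrite mulA, mulVg, mul1g. reflexivity. Qed.
Lemma inv_uniq a b : mul a b = one -> b = inv a.
Proof. intro E. rewrite <- (mul1g _ b), <- (mulVg _ a), <- mulA, E, mulg1. reflexivity. Qed.
Lemma invinv a : inv (inv a) = a.
Proof. symmetry. apply inv_uniq. apply mulVg. Qed.
Lemma invM a b : inv (mul a b) = mul (inv b) (inv a).
Proof. symmetry. apply inv_uniq. rewrite <- mulA, (mulA _ b), mulgV, mul1g, mulgV. reflexivity. Qed.
Lemma inv1 : inv (one (t:=T)) = one.
Proof. symmetry. apply inv_uniq. apply mulg1. Qed.

Lemma open_ext (W W' : T -> Prop) : (forall x, W x <-> W' x) -> is_open W -> is_open W'.
Proof.
  intros E HW. replace W' with W; auto.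
  apply functional_extensionality; intro x; apply propositional_extensionality; auto.
Qed.

Lemma open_local (W : T -> Prop) :
  (forall x, W x -> exists V, is_open V /\ V x /\ forall y, V y -> W y) -> is_open W.
Proof.
  intros L.
  apply (open_ext (fun x => exists U, (is_open U /\ forall y, U y -> W y) /\ U x)).
  - intro x; split.
    + intros [U [[_ HU] Ux]]; auto.
    + intros Wx. destruct (L x Wx) as [V [HV [Vx HVW]]]. exists V; auto.
  - apply (open_union T (fun U => is_open U /\ forall y, U y -> W y)). intros U [HU _]; exact HU.
Qed.

Lemma open_lmul c (W : T -> Prop) : is_open W -> is_open (fun z => W (mul c z)).
Proof.
  intros HW. apply open_local. intros z Wz.
  destruct (mul_continuous T W c z HW Wz) as [U [V [HU [HV [Uc [Vz HUV]]]]]].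
  exists V; repeat split; auto.
Qed.

Lemma open_rmul c (W : T -> Prop) : is_open W -> is_open (fun z => W (mul z c)).
Proof.
  intros HW. apply open_local. intros z Wz.
  destruct (mul_continuous T W z c HW Wz) as [U [V [HU [HV [Uz [Vc HUV]]]]]].
  exists U; repeat split; auto.
Qed.
End GL.

Lemma hom_one (A B : TopGroup) (f : A -> B) : is_hom A B f -> f one = one.
Proof.
  intros Hf. assert (E : f one = mul (f one) (f one)) by (rewrite <- Hf, mul1g; reflexivity).
  rewrite <- (mulKg B (f one) (f one)), <- E, mulVg. reflexivity.
Qed.

Lemma hom_inv (A B : TopGroup) (f : A -> B) a : is_hom A B f -> f (inv a) = inv (f a).
Proof.
  intros Hf. apply inv_uniq. rewrite <- Hf, mulgV. apply hom_one; auto.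
Qed.

Section Perm.
Variable X : Type.
Record perm := Perm { pf : X -> X; pg : X -> X;
  pK : forall x, pg (pf x) = x; pK' : forall x, pf (pg x) = x }.

Lemma perm_ext (s r : perm) : (forall x, pf s x = pf r x) -> s = r.
Proof.
  intros H. destruct s as [f1 g1 K1 K1'], r as [f2 g2 K2 K2']; simpl in *.
  assert (Ef : f1 = f2) by (apply functional_extensionality; exact H).
  subst f2.
  assert (Eg : g1 = g2).
  { apply functional_extensionality; intro x.
    rewrite <- (K2 (g1 x)). rewrite K1'. reflexivity. }
  subst g2. f_equal; apply proof_irrelevance.
Qed.

Definition pmul (s r : perm) : perm.
Proof.
  refine (Perm (fun x => pf s (pf r x)) (fun x => pg r (pg s x)) _ _).
  - intro x. rewrite pK, pK. reflexivity.
  - intro x. rewrite pK', pK'. reflexivity.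
Defined.

Definition pinv (s : perm) : perm := Perm (pg s) (pf s) (pK' s) (pK s).
Definition pone : perm := Perm (fun x => x) (fun x => x) (fun x => eq_refl) (fun x => eq_refl).

Definition popen (W : perm -> Prop) : Prop :=
  forall s, W s -> exists l, forall r, (forall p, In p l -> pf r p = pf s p) -> W r.

Lemma agree_open s l : popen (fun r => forall p, In p l -> pf r p = pf s p).
Proof. intros s' Hs'. exists l. intros r Hr p Hp. rewrite Hr by auto. auto. Qed.

Lemma pmulA x y z : pmul x (pmul y z) = pmul (pmul x y) z.
Proof. apply perm_ext. reflexivity. Qed.
Lemma pmul1g x : pmul pone x = x.
Proof. apply perm_ext. reflexivity. Qed.
Lemma pmulg1 x : pmul x pone = x.
Proof. apply perm_ext. reflexivity. Qed.
Lemma pmulVg x : pmul (pinv x) x = pone.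
Proof. apply perm_ext. intro p. simpl. apply pK. Qed.
Lemma pmulgV x : pmul x (pinv x) = pone.
Proof. apply perm_ext. intro p. simpl. apply pK'. Qed.

Lemma popen_full : popen (fun _ => True).
Proof. intros s _. exists nil. auto. Qed.

Lemma popen_inter U V : popen U -> popen V -> popen (fun x => U x /\ V x).
Proof.
  intros HU HV s [Us Vs]. destruct (HU s Us) as [l1 H1]. destruct (HV s Vs) as [l2 H2].
  exists (l1 ++ l2). intros r Hr. split.
  - apply H1. intros p Hp. apply Hr. apply in_or_app; auto.
  - apply H2. intros p Hp. apply Hr. apply in_or_app; auto.
Qed.

Lemma popen_union (Fam : (perm -> Prop) -> Prop) :
  (forall U, Fam U -> popen U) -> popen (fun x => exists U, Fam U /\ U x).
Proof.
  intros HF s [U [FU Us]]. destruct (HF U FU s Us) as [l Hl]. exists l.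
  intros r Hr. exists U. split; auto.
Qed.

Lemma pmul_cont : forall W x y, popen W -> W (pmul x y) ->
      exists U V, popen U /\ popen V /\ U x /\ V y /\
        (forall a b, U a -> V b -> W (pmul a b)).
Proof.
  intros W s r HW Hw. destruct (HW _ Hw) as [l Hl].
  exists (fun a => forall p, In p (map (pf r) l) -> pf a p = pf s p),
         (fun b => forall p, In p l -> pf b p = pf r p).
  split; [apply agree_open|]. split; [apply agree_open|].
  split; [auto|]. split; [auto|].
  intros a b Ha Hb. apply Hl. intros p Hp. simpl. rewrite Hb by auto. apply Ha. apply in_map; auto.
Qed.

Lemma pinv_cont : forall W, popen W -> popen (fun x => W (pinv x)).
Proof.
  intros W HW s Hs. destruct (HW _ Hs) as [l Hl]. exists (map (pg s) l).
  intros r Hr. apply Hl. intros p Hp. simpl.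
  rewrite <- (pK' s p) at 1.
  rewrite <- (Hr (pg s p)) by (apply in_map; auto). rewrite pK. reflexivity.
Qed.

Definition PermG : TopGroup := {|
  carrier := perm; mul := pmul; inv := pinv; one := pone;
  mulA := pmulA; mul1g := pmul1g; mulg1 := pmulg1; mulVg := pmulVg; mulgV := pmulgV;
  is_open := popen; open_full := popen_full; open_inter := popen_inter;
  open_union := popen_union; mul_continuous := pmul_cont; inv_continuous := pinv_cont |}.

Lemma PermG_haus : hausdorff PermG.
Proof.
  intros s r Hne.
  assert (E : exists p, pf s p <> pf r p).
  { apply not_all_ex_not. intro A. apply Hne. apply perm_ext. auto. }
  destruct E as [p Hp].
  exists (fun a : perm => pf a p = pf s p), (fun a : perm => pf a p = pf r p).
  split; [|split].
  - intros a Ha. exists (p :: nil). intros b Hb. rewrite Hb by (left; auto). exact Ha.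
  - intros a Ha. exists (p :: nil). intros b Hb. rewrite Hb by (left; auto). exact Ha.
  - split; auto. split; auto. intros z E1 E2. apply Hp. rewrite <- E1, <- E2. reflexivity.
Qed.
End Perm.

Section Main.
Variable G : TopGroup.
Variable H : G -> Prop.
Hypothesis Hsub : is_subgroup G H.
Hypothesis Hop : is_open H.
Variable I : G -> Prop.
Hypothesis I1 : I one.
Hypothesis Imul : forall a b, I a -> I b -> I (mul a b).
Hypothesis Iinv : forall a, I a -> I (inv a).

Definition XT := ((G -> Prop) * bool)%type.
Definition coset (S : G -> Prop) := exists a, S = fun z => H (mul (inv a) z).
Definition transl (y : G) (S : G -> Prop) : G -> Prop := fun z => S (mul (inv y) z).
Definition actf (y : G) (p : XT) : XT :=
  let (S, b) := p in (if excluded_middle_informative (coset S) then transl y S else S, b).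

Lemma transl_comp y y' S : transl y (transl y' S) = transl (mul y y') S.
Proof.
  apply functional_extensionality; intro z. unfold transl.
  rewrite invM, <- mulA. reflexivity.
Qed.

Lemma transl_one S : transl one S = S.
Proof.
  apply functional_extensionality; intro z. unfold transl. rewrite inv1, mul1g. reflexivity.
Qed.

Lemma coset_transl y S : coset S -> coset (transl y S).
Proof.
  intros [a ->]. exists (mul y a). apply functional_extensionality; intro z.
  unfold transl. rewrite invM, <- mulA. reflexivity.
Qed.

Lemma actf_mul y y' p : actf (mul y y') p = actf y (actf y' p).
Proof.
  destruct p as [S b]. simpl.
  destruct (excluded_middle_informative (coset S)) as [c|c].
  - destruct (excluded_middle_informative (coset (transl y' S))) as [c'|c'].
    + rewrite transl_comp. reflexivity.
    + exfalso. apply c'. apply coset_transl; auto.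
  - destruct (excluded_middle_informative (coset S)) as [c'|c']; [contradiction|reflexivity].
Qed.

Lemma actf_one p : actf one p = p.
Proof.
  destruct p as [S b]. simpl.
  destruct (excluded_middle_informative (coset S)); [rewrite transl_one|]; reflexivity.
Qed.

Definition actP (y : G) : perm XT.
Proof.
  refine (Perm XT (actf y) (actf (inv y)) _ _).
  - intro p. rewrite <- actf_mul, mulVg, actf_one. reflexivity.
  - intro p. rewrite <- actf_mul, mulgV, actf_one. reflexivity.
Defined.

Lemma actP_hom : is_hom G (PermG XT) actP.
Proof. intros y y'. apply perm_ext. intro p. simpl. apply actf_mul. Qed.

Lemma point_nbhd y p : exists V, is_open V /\ V y /\ forall y', V y' -> actf y' p = actf y p.
Proof.
  destruct Hsub as [H1 [Hm Hi]].
  destruct p as [S b].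
  destruct (classic (coset S)) as [c|c].
  - destruct c as [a E].
    exists (fun y' => H (mul (inv a) (mul (inv y) (mul y' a)))).
    split; [|split].
    + apply (open_rmul G a (fun w => H (mul (inv a) (mul (inv y) w)))).
      apply (open_lmul G (inv y) (fun v => H (mul (inv a) v))).
      apply open_lmul; exact Hop.
    + rewrite mulKg, mulVg. exact H1.
    + intros y' Hk. simpl.
      destruct (excluded_middle_informative (coset S)) as [_|c]; [|reflexivity].
      f_equal. subst S. apply functional_extensionality; intro z. unfold transl.
      apply propositional_extensionality. split; intro Hz.
      * assert (Eq : mul (mul (inv a) (mul (inv y) (mul y' a))) (mul (inv a) (mul (inv y') z))
                     = mul (inv a) (mul (inv y) z)).
        { rewrite !mulA, !mulKV. reflexivity. }
        rewrite <- Eq. apply Hm; auto.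
      * assert (Eq : mul (inv (mul (inv a) (mul (inv y) (mul y' a)))) (mul (inv a) (mul (inv y) z))
                     = mul (inv a) (mul (inv y') z)).
        { rewrite !invM, !invinv, !mulA, !mulKV. reflexivity. }
        rewrite <- Eq. apply Hm; auto.
  - exists (fun _ => True). split; [apply open_full|]. split; auto.
    intros y' _. simpl.
    destruct (excluded_middle_informative (coset S)); [contradiction|reflexivity].
Qed.

Lemma list_nbhd l y : exists V, is_open V /\ V y /\
  forall y', V y' -> forall p, In p l -> actf y' p = actf y p.
Proof.
  induction l as [|p l IH].
  - exists (fun _ => True). split; [apply open_full|]. split; auto. intros _ _ p [].
  - destruct IH as [V [HV [Vy HVl]]]. destruct (point_nbhd y p) as [V' [HV' [V'y HV'p]]].
    exists (fun x => V' x /\ V x). split; [apply open_inter; auto|]. split; auto.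
    intros y' [A B] q [<-|Hq]; auto.
Qed.

Lemma actP_cont : continuous G (PermG XT) actP.
Proof.
  intros W HW. apply open_local. intros y Wy.
  destruct (HW _ Wy) as [l Hl].
  destruct (list_nbhd l y) as [V [HV [Vy HVl]]].
  exists V. split; auto. split; auto. intros y' Vy'. apply Hl. intros p Hp. simpl. auto.
Qed.

Definition tauf (p : XT) : XT :=
  let (S, b) := p in
  (S, xorb b (if excluded_middle_informative (exists w, I w /\ S w) then true else false)).

Lemma tauf_inv p : tauf (tauf p) = p.
Proof.
  destruct p as [S b]. simpl. f_equal.
  destruct (excluded_middle_informative (exists w, I w /\ S w)); destruct b; reflexivity.
Qed.

Definition tauP : perm XT := Perm XT tauf tauf tauf_inv tauf_inv.

Lemma tau_comm c p : I c -> actf c (tauf p) = tauf (actf c p).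
Proof.
  intros Ic. destruct p as [S b]. simpl.
  destruct (excluded_middle_informative (coset S)) as [cs|cs]; [|reflexivity].
  f_equal. f_equal.
  destruct (excluded_middle_informative (exists w, I w /\ S w)) as [e|e];
  destruct (excluded_middle_informative (exists w, I w /\ transl c S w)) as [e'|e']; auto.
  - exfalso. apply e'. destruct e as [w [Iw Sw]]. exists (mul c w). split; auto.
    unfold transl. rewrite mulKg. exact Sw.
  - exfalso. apply e. destruct e' as [w [Iw Sw]]. exists (mul (inv c) w). split; auto.
Qed.

Definition hP (y : G) : perm XT := pmul XT tauP (pmul XT (actP y) tauP).

Lemma hP_cont_hom : cont_hom G (PermG XT) hP.
Proof.
  split.
  - intros y y'. apply perm_ext. intro p. simpl. rewrite tauf_inv. apply (f_equal tauf). apply actf_mul.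
  - intros W HW.
    apply (actP_cont (fun z => W (pmul XT tauP (pmul XT z tauP)))).
    apply (open_rmul (PermG XT) tauP (fun w => W (pmul XT tauP w))).
    apply (open_lmul (PermG XT) tauP W). exact HW.
Qed.

Lemma hP_agree c : I c -> hP c = actP c.
Proof.
  intros Ic. apply perm_ext. intro p. simpl. rewrite tau_comm by auto. apply tauf_inv.
Qed.

Lemma hP_differ x : (forall u, H u -> ~ I (mul x u)) -> hP x <> actP x.
Proof.
  destruct Hsub as [H1 [Hm Hi]].
  intros Hx E. assert (E2 := f_equal (fun s => pf XT s (H, false)) E). simpl in E2.
  assert (cH : coset H).
  { exists one. apply functional_extensionality; intro z. rewrite inv1, mul1g. reflexivity. }
  destruct (excluded_middle_informative (exists w, I w /\ H w)) as [e|e].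
  2: { apply e. exists one. auto. }
  simpl in E2.
  destruct (excluded_middle_informative (coset H)) as [_|n]; [|contradiction].
  destruct (excluded_middle_informative (exists w, I w /\ transl x H w)) as [e'|e'].
  - destruct e' as [w [Iw Hw]]. apply (Hx _ Hw). rewrite mulA, mulgV, mul1g. exact Iw.
  - simpl in E2. injection E2. discriminate.
Qed.
End Main.

Theorem theorem6p7 (G M : TopGroup) (f : M -> G) :
  non_archimedean G -> hausdorff G -> hausdorff M ->
  cont_hom M G f -> epi_Haus M G f -> dense_image M G f.
Proof.
  intros NA HG HM [fhom fcont] Epi U0 HU0 [x Ux].
  apply NNPP; intro Hno.
  destruct (NA (fun z => U0 (mul x z))) as [H [Hsub [Hop HW]]].
  { apply open_lmul; exact HU0. }
  { rewrite mulg1. exact Ux. }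
  set (I := fun z : G => exists m, z = f m).
  assert (I1 : I one) by (exists one; symmetry; apply hom_one; auto).
  assert (Imul : forall a b, I a -> I b -> I (mul a b)).
  { intros a b [m ->] [n ->]. exists (mul m n). symmetry; apply fhom. }
  assert (Iinv : forall a, I a -> I (inv a)).
  { intros a [m ->]. exists (inv m). symmetry; apply hom_inv; auto. }
  apply (hP_differ G H Hsub I I1 x).
  - intros u Hu [m Em]. apply Hno. exists m. rewrite <- Em. apply HW. exact Hu.
  - apply (Epi (PermG (XT G)) (PermG_haus _)).
    + apply hP_cont_hom; auto.
    + split; [apply actP_hom | apply actP_cont]; auto.
    + intro m. apply hP_agree; auto. exists m. reflexivity.
Qed.
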